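(* For any $z\in\mathbb{R}^d$, $R>0$, $x\in B_{d,1}(z,R)$ and $0\le r\le 2R/(d+2)$, $$\lambda\big[B_{d,1}(z,R)\cap B_{d,2}(x,r)\big]\ge\frac{V_{d,1}}{V_{d,2}\,2^d}\,\lambda\big[B_{d,2}(x,r)\big].$$
   Context: $\lambda$ is Lebesgue measure on $\mathbb{R}^d$. For $p\ge1$, $B_{d,p}(x,r)=\{y\in\mathbb{R}^d:\sum_{j=1}^d|y_j-x_j|^p\le r^p\}$ is the closed $\ell_p$ ball, and $V_{d,p}=\lambda[B_{d,p}(0,1)]$. *)

(* Defs.v *)
From HB Require Import structures.
From mathcomp Require Import all_boot all_order all_algebra.
From mathcomp Require Import all_classical all_reals all_analysis.
Set Implicit Arguments. Unset Strict Implicit. Unset Printing Implicit Defensive.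
Import Order.TTheory GRing.Theory Num.Theory.
Local Open Scope classical_set_scope.
Local Open Scope ring_scope.

(* Points of R^d are row vectors 'rV[R]_d; coordinate j of y is y ord0 j. *)

Definition box (R : realType) (d : nat) (a b : 'I_d -> R) : set 'rV[R]_d :=
  [set y | forall j : 'I_d, a j <= y ord0 j <= b j].

Definition box_vol (R : realType) (d : nat) (a b : 'I_d -> R) : R :=
  \prod_(j < d) Num.max 0 (b j - a j).

(* d-dimensional Lebesgue (outer) measure: infimum of total volumes of
   countable box covers.  On Borel sets (all sets used below) it coincides
   with Lebesgue measure. *)
Definition lebesgue_d (R : realType) (d : nat) (A : set 'rV[R]_d) : \bar R :=
  ereal_inf [set s : \bar R | exists (a b : nat -> 'I_d -> R),
     A `<=` \bigcup_k box (a k) (b k) /\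
     s = (\sum_(0 <= k <oo) (box_vol (a k) (b k))%:E)%E].

Definition lp_ball (R : realType) (d : nat) (p : R) (x : 'rV[R]_d) (r : R)
  : set 'rV[R]_d :=
  [set y | \sum_(j < d) (`|y ord0 j - x ord0 j| `^ p) <= r `^ p].

Definition V (R : realType) (d : nat) (p : R) : \bar R :=
  lebesgue_d (lp_ball p (0 : 'rV[R]_d) 1).

(* Main.v *)
Require Import Defs.
From HB Require Import structures.
From mathcomp Require Import all_boot all_order all_algebra.
From mathcomp Require Import all_classical all_reals all_analysis.
From mathcomp Require Import ring lra.
Import Order.TTheory GRing.Theory Num.Theory.
Local Open Scope classical_set_scope.
Local Open Scope ring_scope.
Set Implicit Arguments. Unset Strict Implicit.
Section H.
Variables (R : realType) (d : nat).
Implicit Types A B : set 'rV[R]_d.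

Lemma box_vol_ge0 (a b : 'I_d -> R) : 0 <= box_vol a b.
Proof. by apply: prodr_ge0 => j _; rewrite le_max lexx. Qed.

Lemma lam_ge0 A : (0 <= lebesgue_d A)%E.
Proof.
apply: le_ereal_inf_tmp => _ [a [b [_ ->]]].
by apply: nneseries_ge0 => n _ _; rewrite lee_fin box_vol_ge0.
Qed.

Lemma lam_mono A B : A `<=` B -> (lebesgue_d A <= lebesgue_d B)%E.
Proof.
move=> AB; apply: ereal_inf_le_tmp => _ [a [b [cov ->]]].
by exists a, b; split => //; exact: subset_trans cov.
Qed.

Lemma lam_aff (c : R) (t : 'rV[R]_d) A B : 0 < c ->
  (forall w, B w -> exists2 y, A y & w = c *: y + t) ->
  (lebesgue_d B <= (c ^+ d)%:E * lebesgue_d A)%E.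
Proof.
move=> c0 hB; rewrite -ereal_inf_pZl ?exprn_gt0 //.
apply: ereal_inf_le_tmp => _ [s [a [b [cov ->]]] <-].
exists (fun k j => c * a k j + t ord0 j), (fun k j => c * b k j + t ord0 j).
split.
  move=> w /hB [y /cov [k _ hk] ->]; exists k => // j.
  have /andP[h1 h2] := hk j; rewrite !mxE.
  by rewrite !lerD2r !ler_pM2l // h1 h2.
rewrite -nneseriesZl; last by move=> i _; rewrite lee_fin box_vol_ge0.
apply: eq_eseriesr => k _; congr (_%:E).
have -> : c ^+ d = \prod_(j < d) c by rewrite prodr_const card_ord.
rewrite /box_vol -big_split /=.
apply: eq_bigr => j _.
rewrite (maxr_pMr _ _ (ltW c0)) mulr0; congr (Num.max _ _); ring.
Qed.

Lemma lam_single (t : 'rV[R]_d) B : (0 < d)%N ->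
  (forall w, B w -> w = t) -> (lebesgue_d B <= 0)%E.
Proof.
move=> d0 hB; apply: ereal_inf_lbound.
exists (fun _ j => t ord0 j), (fun _ j => t ord0 j); split.
  by move=> w /hB ->; exists 0%N => // j; rewrite lexx.
rewrite eseries0 // => i _ _; congr (_%:E).
by rewrite /box_vol (bigD1 (Ordinal d0)) //= subrr maxxx mul0r.
Qed.
End H.
Section G.
Variables (R : realType) (d : nat).
Definition n1 (u v : 'rV[R]_d) := \sum_(j < d) `|u ord0 j - v ord0 j|.
Definition n2 (u v : 'rV[R]_d) := \sum_(j < d) (u ord0 j - v ord0 j) ^+ 2.

Lemma ball1E x r y : 0 <= r -> lp_ball 1 x r y <-> n1 y x <= r.
Proof.
move=> r0; rewrite /lp_ball /= powRr1 //.
by under eq_bigr do rewrite powRr1 //.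
Qed.

Lemma ball2E x r y : 0 <= r -> lp_ball 2 x r y <-> n2 y x <= r ^+ 2.
Proof.
move=> r0; rewrite /lp_ball /= powR_mulrn //.
by under eq_bigr do rewrite powR_mulrn // real_normK ?num_real //.
Qed.

Lemma n1_sym u v : n1 u v = n1 v u.
Proof. by apply: eq_bigr => j _; rewrite distrC. Qed.

Lemma n1_tri u v w : n1 u w <= n1 u v + n1 v w.
Proof.
rewrite /n1 -big_split /=; apply: ler_sum => j _.
by rewrite -[u ord0 j - _](subrKA (v ord0 j)) ler_normD.
Qed.

Lemma n2_le_n1 u v : n2 u v <= n1 u v ^+ 2.
Proof.
rewrite /n2 expr2 big_distrl /=; apply: ler_sum => j _.
rewrite -real_normK ?num_real // expr2 ler_wpM2l //.
rewrite /n1 (bigD1 j) //= lerDl; apply: sumr_ge0 => i _; exact: normr_ge0.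
Qed.

Lemma exists_y (x z : 'rV[R]_d) (Rad rho : R) : 0 <= rho <= Rad ->
  n1 x z <= Rad -> exists y, n1 y z <= Rad - rho /\ n1 y x <= rho.
Proof.
move=> /andP[r0 rR] hs; set s := n1 x z.
have [h|h] := leP s (Rad - rho).
  exists x; split => //; rewrite /n1 big1 // => j _; by rewrite subrr normr0.
have s0 : 0 < s by apply: le_lt_trans h; rewrite subr_ge0.
set t := (s - (Rad - rho)) / s.
have t1 : 1 - t = (Rad - rho) / s by rewrite /t; field; rewrite gt_eqF.
have t0 : 0 <= t by rewrite /t divr_ge0 ?(ltW s0) // subr_ge0 ltW.
exists (x + t *: (z - x)); split.
  have e j : (x + t *: (z - x)) ord0 j - z ord0 j = (1 - t) * (x ord0 j - z ord0 j).
    by rewrite !mxE; ring.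
  rewrite /n1; under eq_bigr do rewrite e normrM.
  rewrite -big_distrr /= -/(n1 x z) -/s t1 ger0_norm; last first.
    by rewrite divr_ge0 ?(ltW s0) // subr_ge0.
  by rewrite divfK ?gt_eqF.
have e j : (x + t *: (z - x)) ord0 j - x ord0 j = t * (z ord0 j - x ord0 j).
  by rewrite !mxE; ring.
rewrite /n1; under eq_bigr do rewrite e normrM.
rewrite -big_distrr /= -/(n1 z x) n1_sym -/s ger0_norm // /t divfK ?gt_eqF //.
move: hs; rewrite -/s; lra.
Qed.
End G.

Theorem lemmaC1 (R : realType) (d : nat) (z x : 'rV[R]_d) (Rad r : R) :
  (0 < d)%N -> 0 < Rad ->
  lp_ball 1 z Rad x ->
  0 <= r -> r <= 2 * Rad / (d%:R + 2) ->
  (lebesgue_d (lp_ball 1 z Rad `&` lp_ball 2 x r) >=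
   (fine (V d 1) / (fine (V d 2) * 2 ^+ d))%:E * lebesgue_d (lp_ball 2 x r))%E.
Proof.
move=> d0 R0 hx r0 hr.
have hx1 : n1 x z <= Rad by apply/ball1E => //; exact: ltW.
have := r0; rewrite le_eqVlt => /orP[/eqP r00|rpos].
  have h : lebesgue_d (lp_ball 2 x r) = 0%E.
    apply/le_anti; rewrite lam_ge0 andbT; apply: (lam_single (t := x) d0).
    move=> w /(ball2E _ _ r0); rewrite -r00 expr0n /= => hw.
    have hw0 : n2 w x = 0 by apply/le_anti; rewrite hw sumr_ge0 // => j _; exact: sqr_ge0.
    have := psumr_eq0P (fun j _ => sqr_ge0 (w ord0 j - x ord0 j)) hw0.
    move=> H; apply/rowP => j; move/eqP: (H j isT).
    by rewrite sqrf_eq0 subr_eq0 => /eqP; rewrite !ord1.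
  by rewrite h mule0; exact: lam_ge0.
set rho := r / 2.
have rho0 : 0 < rho by rewrite divr_gt0.
have hrho : 0 <= rho <= Rad.
  rewrite (ltW rho0) /=.
  have D0 : 0 <= d%:R :> R by rewrite ler0n.
  move: hr; rewrite ler_pdivlMr; last by lra.
  rewrite /rho; nra.
have [y [hy1 hy2]] := exists_y hrho hx1.
have n1ge0 (u v : 'rV[R]_d) : 0 <= n1 u v by apply: sumr_ge0 => j _; exact: normr_ge0.
have sub : lp_ball 1 y rho `<=` lp_ball 1 z Rad `&` lp_ball 2 x r.
  move=> u /(ball1E _ _ (ltW rho0)) hu; split.
    apply/ball1E; first exact: ltW.
    apply: le_trans (n1_tri u y z) _; lra.
  apply/ball2E => //; apply: le_trans (n2_le_n1 u x) _.
  have : n1 u x <= r by apply: le_trans (n1_tri u y x) _; rewrite /rho in hu hy2 *; lra.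
  have := n1ge0 u x; nra.
have L1 : ((rho ^+ d)%:E * V d 1 <= lebesgue_d (lp_ball 1 y rho))%E.
  have := @lam_aff R d rho^-1 (- (rho^-1 *: y)) (lp_ball 1 y rho) (lp_ball 1 0 1)
    ltac:(by rewrite invr_gt0).
  move=> h; rewrite -lee_pdivlMl ?exprn_gt0 // -exprVn; apply: h.
  move=> w /(ball1E _ _ ler01) hw; exists (rho *: w + y).
    apply/ball1E; first exact: ltW.
    have e j : (rho *: w + y) ord0 j - y ord0 j = rho * (w ord0 j - (0 : 'rV[R]_d) ord0 j).
      by rewrite !mxE; ring.
    rewrite /n1; under eq_bigr do rewrite e normrM.
    rewrite -big_distrr /= gtr0_norm //; rewrite -[X in _ <= X]mulr1 ler_wpM2l //.
    exact: ltW.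
  apply/rowP => j; rewrite !mxE; field; exact: lt0r_neq0.
have L2 : (lebesgue_d (lp_ball 2 x r) <= (r ^+ d)%:E * V d 2)%E.
  apply: (@lam_aff R d r x) => // w /(ball2E _ _ r0) hw.
  exists (r^-1 *: (w - x)); last by apply/rowP => j; rewrite !mxE; field; exact: lt0r_neq0.
  apply/ball2E; first exact: ler01.
  have e j : (r^-1 *: (w - x)) ord0 j - (0 : 'rV[R]_d) ord0 j = r^-1 * (w ord0 j - x ord0 j).
    by rewrite !mxE; ring.
  rewrite /n2; under eq_bigr do rewrite e exprMn.
  rewrite -big_distrr /= -/(n2 w x) expr1n.
  rewrite -(mulVf (expf_neq0 2 (lt0r_neq0 rpos))) exprVn ler_wpM2l //.
  by rewrite invr_ge0 exprn_ge0 // ltW.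
apply: le_trans (lam_mono sub); apply: le_trans L1.
have V1ge0 := lam_ge0 (lp_ball 1 (0 : 'rV[R]_d) 1).
have V2ge0 := lam_ge0 (lp_ball 2 (0 : 'rV[R]_d) 1).
have c0 : (0 <= (fine (@V R d 1) / (fine (@V R d 2) * 2 ^+ d))%:E)%E.
  suff : (0 <= fine (@V R d 1) / (fine (@V R d 2) * 2 ^+ d))%R by [].
  by rewrite divr_ge0 ?mulr_ge0 ?exprn_ge0 ?fine_ge0.
apply: le_trans (lee_wpmul2l c0 L2) _.
have rd0 : (0 <= (rho ^+ d)%:E)%E.
  suff: (0 <= rho ^+ d)%R by [].
  by rewrite exprn_ge0 // ltW.
move: V1ge0 V2ge0; rewrite /V.
case: (lebesgue_d (lp_ball 2 (0 : 'rV[R]_d) 1)) => [v| |] V1ge0 V2ge0; last first.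
- by [].
- by rewrite /= mul0r invr0 mulr0 mul0e; exact: mule_ge0.
move: V1ge0.
case: (lebesgue_d (lp_ball 1 (0 : 'rV[R]_d) 1)) => [w| |] V1ge0; last first.
- by [].
- by rewrite /= mul0r mul0e; exact: mule_ge0.
rewrite /= -!EFinM lee_fin.
have w0 : (0 <= w)%R := V1ge0.
have v0 : (0 <= v)%R := V2ge0.
have [->|vn0] := eqVneq v 0.
  by rewrite !(mulr0, mul0r, invr0); rewrite mulr_ge0 // exprn_ge0 // ltW.
rewrite /rho expr_div_n le_eqVlt; apply/orP; left; apply/eqP.
field; rewrite vn0 /= expf_neq0 //.
Qed.
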